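(* Let $t$ be a rooted tree with vertex set $I$, and let $\mu(\widehat{0},t)$ be the Möbius number of the interval $[\widehat{0},t]$ in $\Pi_{\operatorname{NAP}}(I)$. If $t$ is a corolla with $n+1$ vertices (a root joined directly to $n$ leaves, $n\geq0$), then $\mu(\widehat{0},t)=(-1)^n$; otherwise $\mu(\widehat{0},t)=0$.
   Context: $\Pi_{\operatorname{NAP}}(I)$ is the set of forests of rooted trees whose vertex set is exactly $I$, partially ordered as follows: $y$ covers $x$ iff $y$ is obtained from $x$ by adding an edge from the root of one component of $x$ to the root of another component (the latter root remaining the root); $\leq$ is the reflexive–transitive closure; $\widehat{0}$ is the forest of one-vertex trees. The Möbius number of an interval $[a,b]$ is $\mu(a,b)$ for the Möbius function of the poset. *)

(* Defs.v *)
From HB Require Import structures.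
From mathcomp Require Import all_boot all_order all_algebra.
Set Implicit Arguments. Unset Strict Implicit. Unset Printing Implicit Defensive.
Import GRing.Theory Num.Theory.
Local Open Scope ring_scope.

(* The recursion is run with fuel #|T|, which exceeds the length of every
   chain in T, so it computes the genuine Möbius function. *)
Fixpoint mobius_rec (T : finType) (le : rel T) (k : nat) (x y : T) : int :=
  match k with
  | 0%N => (x == y)%:Z
  | k'.+1 =>
      if x == y then 1
      else if le x y then
        - \sum_(z : T | le x z && le z y && (z != y)) mobius_rec le k' x z
      else 0
  end.

Definition mobius (T : finType) (le : rel T) (x y : T) : int :=
  mobius_rec le #|T| x y.

(* Rooted forests with vertex set exactly I, encoded by the parent map:
   par v = None iff v is a root, par v = Some w iff w is the parent of v. *)
Definition parent_acyclic (I : finType) (par : {ffun I -> option I}) : bool :=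
  [forall x : I, iter #|I|.+1 (obind par) (Some x) == None].

Definition forest (I : finType) := {par : {ffun I -> option I} | parent_acyclic par}.

Definition is_root (I : finType) (x : forest I) (v : I) : bool := val x v == None.

(* y covers x iff y is obtained from x by adding an edge from the root r1 of
   one component to the root r2 of another component, r2 staying the root
   (so r1 becomes a child of r2). *)
Definition nap_cover (I : finType) : rel (forest I) := fun x y =>
  [exists r1 : I, exists r2 : I,
     [&& r1 != r2, is_root x r1, is_root x r2 &
      val y == [ffun v => if v == r1 then Some r2 else val x v]]].

Definition nap_le (I : finType) : rel (forest I) := connect (@nap_cover I).

Lemma zero_forest_acyclic (I : finType) :
  parent_acyclic [ffun _ : I => (None : option I)].
Proof.
apply/forallP => x; rewrite iterS.
by case: (iter _ _ _) => [v|] //=; rewrite ffunE.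
Qed.

Definition nap_zero (I : finType) : forest I :=
  exist _ [ffun _ => None] (zero_forest_acyclic I).

Definition is_tree (I : finType) (t : forest I) : bool :=
  #|[set v | is_root t v]| == 1%N.

Definition is_corolla (I : finType) (t : forest I) : bool :=
  [exists r : I, is_root t r && [forall v : I, (v != r) ==> (val t v == Some r)]].

(* Main.v *)
Require Import Defs.
From mathcomp Require Import all_boot all_order all_algebra.
Import GRing.Theory Num.Theory.
Local Open Scope ring_scope.
Set Implicit Arguments. Unset Strict Implicit.

Section S.
Variable I : finType.
Implicit Types (w z : forest I).

Definition nonroots w : {set I} := [set v | val w v != None].
Definition depth1 w : bool :=
  [forall v, forall p, (val w v == Some p) ==> (val w p == None)].
Definition fval w : int := if depth1 w then (-1) ^+ #|nonroots w| else 0.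
Definition leaves w : {set I} :=
  [set v | (val w v != None) && [forall d, val w d != Some v]].

Lemma sub_acyclic (par par' : {ffun I -> option I}) :
  (forall v, par' v = None \/ par' v = par v) -> parent_acyclic par -> parent_acyclic par'.
Proof.
move=> H /forallP A; apply/forallP => x.
have: forall n, iter n (obind par') (Some x) = None \/
   iter n (obind par') (Some x) = iter n (obind par) (Some x).
  elim=> [|n IH]; first by right.
  rewrite !iterS; case: IH => ->; first by left.
  case: (iter n (obind par) (Some x)) => [u|] /=; last by left.
  exact: H.
case/(_ #|I|.+1) => ->; first by []. exact: A.
Qed.

Definition sub_par w (K : {set I}) : {ffun I -> option I} :=
  [ffun v => if v \in K then val w v else None].
Lemma sub_par_acyclic w (K : {set I}) : parent_acyclic (sub_par w K).
Proof.
apply: (@sub_acyclic (val w) _ _ (valP w)) => v; rewrite ffunE; case: (v \in K); [right|left]; done.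
Qed.
Definition sub_forest w (K : {set I}) : forest I := exist _ (sub_par w K) (sub_par_acyclic w K).

Definition Rrel z w := (forall v p, val z v = Some p -> val w v = Some p) /\
  (forall v p d, val z v = Some p -> val w d = Some v -> val z d = Some v).

Lemma cover_R x y w : nap_cover x y -> Rrel y w -> Rrel x w.
Proof.
case/existsP=> r1 /existsP [r2 /and4P [ne Hr1 Hr2 /eqP Hy]] [R1 R2].
have yE v : val y v = if v == r1 then Some r2 else val x v by rewrite Hy ffunE.
have xy v p : val x v = Some p -> val y v = Some p.
  move=> Hv; rewrite yE; case: eqP => // E; subst v.
  by move: Hr1; rewrite /is_root Hv.
split.
- move=> v p /xy; exact: R1.
- move=> v p d Hv Hd. have := R2 _ _ _ (xy _ _ Hv) Hd.
  rewrite yE; case: eqP => [E [E2]| _ //]; subst.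
  by move: Hr2; rewrite /is_root Hv.
Qed.

Lemma le_R z w : nap_le z w -> Rrel z w.
Proof.
case/connectP=> p Hp ->; elim: p z Hp => [|y p IH] z /=.
  by move=> _; split.
move=> /andP [Hc Hp]; exact: (@cover_R z y _ Hc (IH y Hp)).
Qed.

Lemma le_sub z w : nap_le z w -> sub_forest w (nonroots z) = z.
Proof.
move/le_R=> [R1 _]; apply: val_inj; apply/ffunP=> v; rewrite /= ffunE inE.
case E: (val z v) => [p|] /=; [exact: R1|done].
Qed.

Lemma le_lt z w : nap_le z w -> z != w -> (#|nonroots z| < #|nonroots w|)%N.
Proof.
move=> Hle Hne. have [R1 _] := le_R Hle.
have sub : nonroots z \subset nonroots w.
  apply/subsetP=> v; rewrite !inE; case E: (val z v) => [p|] //= _; by rewrite (R1 _ _ E).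
rewrite ltn_neqAle subset_leq_card // andbT.
apply: contra Hne => /eqP Hc.
have Eq : nonroots z = nonroots w by apply/eqP; rewrite eqEcard sub Hc leqnn.
by rewrite -(le_sub Hle) Eq (le_sub (connect0 _ w)).
Qed.

Lemma nonroots0 w : nonroots w = set0 -> w = nap_zero I.
Proof.
move=> H; apply: val_inj; apply/ffunP=> v; rewrite ffunE.
have: v \notin nonroots w by rewrite H inE.
by rewrite inE negbK => /eqP.
Qed.

Lemma nocase w (K : {set I}) : K \subset leaves w ->
  (forall r1 r2, val w r1 = Some r2 -> val w r2 = None -> r1 \in K) ->
  sub_forest w K = w.
Proof.
move=> HK H.
have Q : forall n v p, iter n (obind (val w)) (Some v) = None ->
    val w v = Some p -> val w p = None.
  elim=> [|n IHn] v p //.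
  rewrite iterSr /= => Hit Hv; rewrite Hv in Hit.
  case Ep: (val w p) => [q|] //.
  have Hq := IHn p q Hit Ep.
  have := subsetP HK p (H _ _ Ep Hq); rewrite inE => /andP [_ /forallP /(_ v)].
  by rewrite Hv eqxx.
apply: val_inj; apply/ffunP=> v; rewrite /= ffunE.
case E: (val w v) => [p|]; last by case: (v \in K).
rewrite (H v p E) //; apply: (Q #|I|.+1 v p) => //.
by apply/eqP; move: (valP w) => /forallP /(_ v).
Qed.

Lemma sub_le n : forall w, (#|nonroots w| <= n)%N -> forall K : {set I},
  K \subset leaves w -> nap_le (sub_forest w K) w.
Proof.
elim: n => [|n IH] w Hn K HK;
  (case: (boolP [exists r1, exists r2, [&& val w r1 == Some r2, val w r2 == None & r1 \notin K]])
    => [/existsP [r1 /existsP [r2 /and3P [/eqP E1 /eqP E2 NK]]]|/existsPn no]; last first;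
   [rewrite (nocase HK); [exact: connect0|];
    move=> r1 r2 E1 E2; move: (no r1) => /existsPn /(_ r2);
    by rewrite E1 E2 !eqxx /= negbK |]).
- have : r1 \in nonroots w by rewrite inE E1.
  by move: Hn; rewrite leqn0 cards_eq0 => /eqP ->; rewrite inE.
set y := sub_forest w (~: [set r1]).
have yE v : val y v = if v == r1 then None else val w v.
  by rewrite /= ffunE !inE; case: (v == r1).
have nr : nonroots y = nonroots w :\ r1.
  apply/setP => v; rewrite !inE yE; by case: (v == r1).
have ne : r1 != r2 by apply/eqP => E; subst; rewrite E1 in E2.
apply: (connect_trans (y := y)).
- have -> : sub_forest w K = sub_forest y K.
    apply: val_inj; apply/ffunP => v; rewrite /= !ffunE !inE.
    case vK: (v \in K) => //; case: eqP => // E; subst; by rewrite vK in NK.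
  apply: IH.
  + move: Hn; rewrite (cardsD1 r1 (nonroots w)) nr inE E1 /=; by rewrite add1n ltnS.
  + apply/subsetP => v vK; have := subsetP HK v vK; rewrite !inE !yE.
    have -> : (v == r1) = false by apply/eqP => E; subst; rewrite vK in NK.
    move=> /andP [-> /forallP Hd] /=; apply/forallP => d; rewrite yE.
    by case: (d == r1); last exact: Hd.
- apply: connect1; apply/existsP; exists r1; apply/existsP; exists r2.
  rewrite ne /is_root !yE eqxx (eq_sym r2 r1) (negbTE ne) E2 eqxx /=.
  apply/eqP/ffunP => v; rewrite ffunE yE; case: eqP => // ->; done.
Qed.

Lemma zero_le w : nap_le (nap_zero I) w.
Proof.
have -> : nap_zero I = sub_forest w set0.
  by apply: val_inj; apply/ffunP => v; rewrite /= !ffunE inE.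
apply: (sub_le (leqnn _)); exact: sub0set.
Qed.

Lemma leaf_exists w : w != nap_zero I -> exists a, a \in leaves w.
Proof.
move=> nz.
have [v0 Hv0] : exists v, val w v != None.
  case: (boolP [exists v, val w v != None]) => [/existsP //|/existsPn H].
  case/eqP: nz; apply/val_inj/ffunP => v; rewrite ffunE.
  by move: (H v); rewrite negbK => /eqP.
case: (boolP [exists a, a \in leaves w]) => [/existsP //|/existsPn noleaf].
exfalso.
pose ch v := odflt v [pick d | val w d == Some v].
have chP v : val w v != None -> val w (ch v) = Some v.
  move=> Hv; move: (noleaf v); rewrite inE Hv /= => /forallPn [d]; rewrite negbK => Hd.
  rewrite /ch; case: pickP => [d' /eqP //|/(_ d)]; by rewrite Hd.
pose vs i := iter i ch v0.
have nr i : val w (vs i) != None.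
  elim: i => // i IHi; rewrite /vs iterS chP //.
have it i : iter i (obind (val w)) (Some (vs i)) = Some v0.
  elim: i => // i IHi; rewrite iterSr /vs iterS /= chP //; exact: nr.
move: (valP w) => /forallP /(_ (vs #|I|.+1)); by rewrite it.
Qed.

Lemma sum_sub_sign (L : {set I}) a : a \in L ->
  \sum_(K : {set I} | K \subset L) (-1) ^+ #|K| = 0 :> int.
Proof.
move=> aL. set S := \sum_(K | _) _.
pose h (K : {set I}) := if a \in K then K :\ a else a |: K.
have hK : involutive h.
  move=> K; rewrite /h; case: (boolP (a \in K)) => aK.
  - by rewrite setD11 setD1K.
  - by rewrite setU11 setU1K.
have : S = - S.
  rewrite {1}/S (reindex_inj (inv_inj hK)) -sumrN; apply: eq_big => K.
  - rewrite /h; case: (boolP (a \in K)) => aK.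
    + apply/idP/idP => /subsetP H; apply/subsetP => x xK.
      * by case: (eqVneq x a) => [->//|xa]; apply: H; rewrite !inE xa.
      * by apply: H; move: xK; rewrite !inE => /andP [].
    + apply/idP/idP => /subsetP H; apply/subsetP => x xK.
      * by apply: H; rewrite !inE xK orbT.
      * by move: xK; rewrite !inE => /orP [/eqP ->|]; [|apply: H].
  - move=> _; rewrite /h; case: (boolP (a \in K)) => aK.
    + by rewrite [in RHS](cardsD1 a K) aK add1n exprS mulN1r opprK.
    + by rewrite cardsU1 aK add1n exprS mulN1r.
move=> E; apply/eqP; move: E => /eqP.
by rewrite -subr_eq0 opprK -mulr2n mulrn_eq0.
Qed.

Lemma sum_le w : w != nap_zero I -> \sum_(z | nap_le z w) fval z = 0.
Proof.
move=> nz. have [a aL] := leaf_exists nz.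
rewrite /fval -big_mkcondr.
rewrite (reindex_onto (sub_forest w) (fun z => nonroots z)); last first.
  by move=> z /andP [Hle _]; exact: le_sub.
apply: (etrans _ (sum_sub_sign aL)); apply: eq_big => K; last by move=> /andP [_ /eqP ->].
have zv v : v \in K -> val (sub_forest w K) v = val w v by move=> vK; rewrite /= ffunE vK.
apply/idP/idP.
- move=> /andP [/andP [Hle Hd] /eqP HK]; apply/subsetP => v vK.
  have : v \in nonroots (sub_forest w K) by rewrite HK.
  rewrite !inE zv // => Hv; rewrite Hv /=.
  apply/forallP => d; apply/negP => /eqP Hd'.
  have [_ R2] := le_R Hle.
  case E: (val w v) Hv => [p|] // _.
  have := R2 v p d (etrans (zv v vK) E) Hd'.
  move: Hd => /forallP /(_ d) /forallP /(_ v) /implyP H /eqP /H.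
  by rewrite zv // E.
- move=> HK; rewrite (sub_le (leqnn _) HK) /=.
  apply/andP; split.
  + apply/forallP => v; apply/forallP => p; apply/implyP; rewrite /= !ffunE.
    case vK: (v \in K) => //; move=> /eqP Hv.
    case pK: (p \in K) => //.
    have := subsetP HK p pK; rewrite inE => /andP [_ /forallP /(_ v)].
    by rewrite Hv eqxx.
  + apply/eqP/setP => v; rewrite inE /= ffunE.
    case vK: (v \in K) => //.
    by have := subsetP HK v vK; rewrite inE => /andP [].
Qed.

Lemma fval0 : fval (nap_zero I) = 1.
Proof.
rewrite /fval.
have -> : depth1 (nap_zero I).
  by apply/forallP => v; apply/forallP => p; rewrite /= ffunE.
have -> : nonroots (nap_zero I) = set0 by apply/setP => v; rewrite !inE ffunE.
by rewrite cards0.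
Qed.

Lemma mob_rec k w : (#|nonroots w| <= k)%N ->
  mobius_rec (@nap_le I) k (nap_zero I) w = fval w.
Proof.
elim: k w => [|k IH] w Hk.
  move: Hk; rewrite leqn0 cards_eq0 => /eqP /nonroots0 ->.
  by rewrite /= eqxx fval0.
rewrite /=; case: eqP => [<-|/eqP]; [by rewrite fval0|rewrite eq_sym => nz].
rewrite zero_le.
have Hs := sum_le (nz : w != nap_zero I).
rewrite (bigD1 w) /= in Hs; last exact: connect0.
rewrite (eq_big (fun z => nap_le z w && (z != w)) fval).
- by move/eqP: Hs; rewrite addr_eq0 => /eqP ->.
- by move=> z; rewrite zero_le.
- move=> z /andP [/andP [_ Hle] Hne]; apply: IH.
  by rewrite -ltnS; exact: leq_trans (le_lt Hle Hne) Hk.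
Qed.
End S.

Lemma card_le_forest (I : finType) :
  (#|I| <= #|{: {par : {ffun I -> option I} | parent_acyclic par}}|)%N.
Proof.
pose cpar (r : I) : {ffun I -> option I} := [ffun v => if v == r then None else Some r].
have iN n : iter n (obind (fun _ : I => @None I)) None = None.
  by elim: n => // n IHn; rewrite iterS IHn.
have ac r : parent_acyclic (cpar r).
  apply/forallP => x; apply/eqP.
  have iN' n : iter n (obind (cpar r)) None = None by elim: n => // n IHn; rewrite iterS IHn.
  rewrite iterSr.
  have -> : obind (cpar r) (Some x) = if x == r then None else Some r by rewrite /= ffunE.
  case: (x == r); first exact: iN'.
  have : (0 < #|I|)%N by apply/card_gt0P; exists x.
  case: #|I| => // n _; rewrite iterSr.
  have -> : obind (cpar r) (Some r) = None by rewrite /= ffunE eqxx.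
  exact: iN'.
pose cor r : {par : {ffun I -> option I} | parent_acyclic par} := exist _ (cpar r) (ac r).
have inj : injective cor.
  move=> r r' /(congr1 (fun f : forest I => val f r)); rewrite /= !ffunE eqxx.
  by case: eqP.
exact: (leq_card _ inj).
Qed.

Theorem proposition6p13 (I : finType) (t : forest I) :
  is_tree t ->
  mobius (@nap_le I) (nap_zero I) t =
    (if is_corolla t then (-1) ^+ (#|I|.-1) else 0).
Proof.
move=> /cards1P [r Hr].
have rootE v : (val t v == None) = (v == r).
  by have := congr1 (fun A : {set I} => v \in A) Hr; rewrite /= !inE.
have nrC : nonroots t = ~: [set r].
  by apply/setP => v; rewrite !inE rootE.
have cardnr : #|nonroots t| = #|I|.-1.
  by rewrite nrC cardsC1.
rewrite /mobius mob_rec; last first.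
  rewrite cardnr; apply: leq_trans (card_le_forest I); exact: leq_pred.
have -> : is_corolla t = depth1 t.
  apply/idP/idP.
  - move=> /existsP [r' /andP [Hr' /forallP H]].
    apply/forallP => v; apply/forallP => p; apply/implyP => /eqP Hv.
    have vr : v != r' by apply/eqP => E; subst; move: Hr'; rewrite /is_root Hv.
    move: (H v); rewrite vr Hv /= => /eqP [->]; exact: Hr'.
  - move=> /forallP H; apply/existsP; exists r.
    rewrite /is_root rootE eqxx /=; apply/forallP => v; apply/implyP => vr.
    case E: (val t v) => [p|]; last by move: vr; rewrite -rootE E.
    move: (H v) => /forallP /(_ p); rewrite E eqxx /= rootE => /eqP ->; done.
by rewrite /fval cardnr.
Qed.
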